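(* Consider the Markovian switching system $x_{k+1}=f(x_k,u_k,\theta_k)$ with constraints $(x_k,u_k)\in Y_{\theta_k}$, stage cost $\ell$, and suppose the controllability assumption below holds (together with the well-posedness assumption). Let $X_N\subseteq\mathbb{R}^n\times\mathcal{N}$ be the set of pairs $(x,\theta)$ for which the EMPC problem $\mathbb{P}(x,\theta)$ is feasible, and let $\kappa_N$ be the associated receding horizon control law. If $\mathbb{P}(x_k,\theta_k)$ is feasible, then $\mathbb{P}(x_{k+1},\theta_{k+1})$ is feasible, where $x_{k+1}=f(x_k,\kappa_N(x_k,\theta_k),\theta_k)$ and $\theta_{k+1}$ is any element of $\mathcal{C}(\theta_k)$.
   Context: Let $\mathcal{N}=\{1,\dots,\nu\}$ and let $\{\theta_k\}_{k\ge 0}$ be a time-homogeneous Markov chain on $\mathcal{N}$ with transition matrix $P=(p_{ij})$ and initial distribution $v$, defined on a filtered probability space $(\Omega,\mathfrak{F},\{\mathfrak{F}_k\}_k,\mathbb{P})$, where $\mathfrak{F}_k$ is the $\sigma$-algebra generated by the history of states, inputs and modes up to time $k$. The system is $x_{k+1}=f(x_k,u_k,\theta_k)$ with $x_k\in\mathbb{R}^n$, $u_k\in\mathbb{R}^m$; at time $k$ both $x_k$ and $\theta_k$ are measured. Constraints: $(x_k,u_k)\in Y_{\theta_k}$, $Y_\theta\subseteq\mathbb{R}^n\times\mathbb{R}^m$. Stage cost $\ell:\mathbb{R}^n\times\mathbb{R}^m\times\mathcal{N}\to\mathbb{R}$. Write $u\lhd\mathfrak{F}_k$ to mean that the random variable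 $u$ is $\mathfrak{F}_k$-measurable. The cover of $i\in\mathcal{N}$ is $\mathcal{C}(i)=\{j\in\mathcal{N}: p_{ij}>0\}$; a bet node of $i$ is some $\mathrm{bet}(i)\in\mathcal{C}(i)$ with $p_{i\,\mathrm{bet}(i)}\ge p_{ij}$ for all $j\in\mathcal{C}(i)$. Well-posedness assumption: for each $\theta$, $\ell(\cdot,\cdot,\theta)$ is nonnegative, lower semicontinuous and level-bounded in $u$ locally uniformly in $x$ (for every $\bar x$ there is a neighbourhood $V$ of $\bar x$ such that $\{(x,u):x\in V,\ \ell(x,u,\theta)\le\alpha\}$ is bounded for every $\alpha$); $f(\cdot,\cdot,\theta)$ is continuous; $Y_\theta$ is nonempty and compact; $\{\theta_k\}$ is irreducible and aperiodic. Optimal steady states: $(x_s^\theta,u_s^\theta)$ is a minimizer of $\ell_s(\theta):=\min_{x,u}\{\ell(x,u,\theta): f(x,u,\theta)=x,\ (x,u)\in Y_\theta\}$. Controllability assumption: for all $i,j\in\mathcal{N}$ there is a control law $\bar u_s:\mathbb{R}^n\times\mathcal{N}\to\mathbb{R}^m$ with $\bar u_s(x_s^i,j)=\bar u_s^{i,j}$ such that $(x_s^i,\bar u_s^{i,j})\in Y_j$ and $f(x_s^i,\bar u_s^{i,j},j)=x_s^{\mathrm{bet}(j)}$. EMPC problem $\mathbb{P}(x,\theta)$: $V_N^\star(x,\theta)=\inf_{\mathbf{u}_N}V_N(x,\theta,\mathbf{u}_N)$, where $\mathbf{u}_N=(u_0,\dots,u_{N-1})$ and $V_N(x_0,\theta_0,\mathbf{u}_N)=\mathbb{E}[\sum_{j=0}^{N-1}\ell(x_j,u_j,\theta_j)\mid\mathfrak{F}_0]$,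 subject to, for $k=0,\dots,N-1$: $x_{k+1}=f(x_k,u_k,\theta_k)$, $(x_k,u_k)\in Y_{\theta_k}$, $(x_0,\theta_0)=(x,\theta)$, $x_N=x_s^{\mathrm{bet}(\theta_{N-1})}$, $u_k\lhd\mathfrak{F}_k$. If $\mathbf{u}^\star(x,\theta)=(u_0^\star(x,\theta),\dots)$ is an optimizer, the receding horizon law is $\kappa_N(x,\theta)=u_0^\star(x,\theta)$. *)

(* Defs.v *)
From mathcomp Require Import all_boot all_order all_algebra all_classical all_reals all_analysis.
Import numFieldNormedType.Exports.
Set Implicit Arguments. Unset Strict Implicit. Unset Printing Implicit Defensive.
Import Order.TTheory GRing.Theory Num.Theory.
Local Open Scope ring_scope.
Local Open Scope classical_set_scope.

(* Modes: N = {1,...,nu} is represented by 'I_nu.  States: 'rV[R]_n,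
   inputs: 'rV[R]_m.  A mode history [:: th_0; ...; th_k] is a seq 'I_nu. *)

Section MJLS.
Variables (R : realType) (n m nu : nat).
Local Notation state := 'rV[R]_n.
Local Notation input := 'rV[R]_m.
Local Notation mode := 'I_nu.

Definition stochastic (P : 'M[R]_nu) : Prop :=
  (forall i j, 0 <= P i j) /\ (forall i, \sum_j P i j = 1).

Definition irreducible (P : 'M[R]_nu) : Prop :=
  forall i j : mode, exists k : nat, 0 < (P ^+ k) i j.

Definition aperiodic (P : 'M[R]_nu) : Prop :=
  forall (i : mode) (d : nat),
    (forall k : nat, (0 < k)%N -> 0 < (P ^+ k) i i -> (d %| k)%N) -> d = 1%N.

Definition mode_cover (P : 'M[R]_nu) (i : mode) : set mode := [set j | 0 < P i j].

Definition is_bet (P : 'M[R]_nu) (bet : mode -> mode) : Prop :=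
  forall i : mode, mode_cover P i (bet i) /\
    (forall j, mode_cover P i j -> P i j <= P i (bet i)).

Definition well_posed (P : 'M[R]_nu) (f : state -> input -> mode -> state)
  (Y : mode -> set (state * input)) (ell : state -> input -> mode -> R) : Prop :=
  (forall th : mode,
     (forall x u, 0 <= ell x u th) /\
     lower_semicontinuous (fun p : state * input => ((ell p.1 p.2 th)%:E)) /\
     (forall xbar : state, exists V : set state, nbhs xbar V /\
        forall alpha : R,
          bounded_set [set p : state * input | V p.1 /\ ell p.1 p.2 th <= alpha]) /\
     continuous (fun p : state * input => f p.1 p.2 th) /\
     Y th !=set0 /\ compact (Y th))
  /\ irreducible P /\ aperiodic P.

Definition optimal_steady_states (f : state -> input -> mode -> state)
  (Y : mode -> set (state * input)) (ell : state -> input -> mode -> R)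
  (xs : mode -> state) (us : mode -> input) : Prop :=
  forall th : mode,
    f (xs th) (us th) th = xs th /\ Y th (xs th, us th) /\
    (forall x u, f x u th = x -> Y th (x, u) -> ell (xs th) (us th) th <= ell x u th).

Definition controllable (f : state -> input -> mode -> state)
  (Y : mode -> set (state * input)) (xs : mode -> state) (bet : mode -> mode) : Prop :=
  exists ubar : state -> mode -> input, forall i j : mode,
    Y j (xs i, ubar (xs i) j) /\ f (xs i) (ubar (xs i) j) j = xs (bet j).

(* A causal policy: u_k = pol [:: th_0; ...; th_k]  (u_k is F_k-measurable). *)
Definition policy := seq mode -> input.

Fixpoint xstate (f : state -> input -> mode -> state) (x0 : state) (th0 : mode)
  (pol : policy) (s : seq mode) (k : nat) : state :=
  match k with
  | 0 => x0
  | k'.+1 => f (xstate f x0 th0 pol s k') (pol (take k'.+1 s)) (nth th0 s k')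
  end.

Definition admissible_path (P : 'M[R]_nu) (N : nat) (th : mode) (s : seq mode) : Prop :=
  size s = N /\ head th s = th /\
  (forall i : nat, (i.+1 < N)%N -> 0 < P (nth th s i) (nth th s i.+1)).

(* pol satisfies the constraints of P(x,th) (almost surely, i.e. on every
   positive-probability mode path) *)
Definition feasible_policy (P : 'M[R]_nu) (f : state -> input -> mode -> state)
  (Y : mode -> set (state * input)) (xs : mode -> state) (bet : mode -> mode)
  (N : nat) (x : state) (th : mode) (pol : policy) : Prop :=
  forall s : seq mode, admissible_path P N th s ->
    (forall k : nat, (k < N)%N ->
        Y (nth th s k) (xstate f x th pol s k, pol (take k.+1 s))) /\
    xstate f x th pol s N = xs (bet (nth th s N.-1)).

Definition feasible (P : 'M[R]_nu) (f : state -> input -> mode -> state)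
  (Y : mode -> set (state * input)) (xs : mode -> state) (bet : mode -> mode)
  (N : nat) (x : state) (th : mode) : Prop :=
  exists pol : policy, feasible_policy P f Y xs bet N x th pol.

(* V_N(x, th, pol) = E[ sum_{j<N} ell(x_j,u_j,th_j) | F_0 ], the expectation
   over the mode path th_0 = th, th_1, ..., th_{N-1} of the Markov chain. *)
Definition VN (P : 'M[R]_nu) (f : state -> input -> mode -> state)
  (ell : state -> input -> mode -> R) (N : nat) (x : state) (th : mode)
  (pol : policy) : R :=
  \sum_(t : (N.-1).-tuple mode)
    let s := th :: (t : seq mode) in
    (\prod_(i < N.-1) P (nth th s i) (nth th s i.+1)) *
    \sum_(k < N) ell (xstate f x th pol s k) (pol (take k.+1 s)) (nth th s k).

Definition optimal_policy (P : 'M[R]_nu) (f : state -> input -> mode -> state)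
  (Y : mode -> set (state * input)) (ell : state -> input -> mode -> R)
  (xs : mode -> state) (bet : mode -> mode) (N : nat) (x : state) (th : mode)
  (pol : policy) : Prop :=
  feasible_policy P f Y xs bet N x th pol /\
  forall pol' : policy, feasible_policy P f Y xs bet N x th pol' ->
    VN P f ell N x th pol <= VN P f ell N x th pol'.

Definition kappaN (pol : policy) (th : mode) : input := pol [:: th].

End MJLS.

(* Main.v *)
Require Import Defs.
From mathcomp Require Import all_boot all_order all_algebra all_classical all_reals all_analysis.
Import numFieldNormedType.Exports.
Import Order.TTheory GRing.Theory Num.Theory.
Local Open Scope ring_scope.
Local Open Scope classical_set_scope.

Theorem proposition1 (R : realType) (n m nu : nat) (P : 'M[R]_nu)
  (f : 'rV[R]_n -> 'rV[R]_m -> 'I_nu -> 'rV[R]_n)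
  (Y : 'I_nu -> set ('rV[R]_n * 'rV[R]_m))
  (ell : 'rV[R]_n -> 'rV[R]_m -> 'I_nu -> R)
  (xs : 'I_nu -> 'rV[R]_n) (us : 'I_nu -> 'rV[R]_m)
  (bet : 'I_nu -> 'I_nu) (N : nat) :
  (0 < N)%N ->
  stochastic P ->
  is_bet P bet ->
  well_posed P f Y ell ->
  optimal_steady_states f Y ell xs us ->
  controllable f Y xs bet ->
  forall (x : 'rV[R]_n) (th : 'I_nu) (ustar : policy R m nu),
    feasible P f Y xs bet N x th ->
    optimal_policy P f Y ell xs bet N x th ustar ->
    forall th' : 'I_nu, mode_cover P th th' ->
      feasible P f Y xs bet N (f x (kappaN ustar th) th) th'.
Proof.
move=> N0 _ _ _ _ [ubar Hub] x th ustar _ [Hfeas _] th' Hcov.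
pose pol' : policy R m nu := fun q =>
  if (size q < N)%N then ustar (th :: q)
  else ubar (xs (bet (nth th (th :: q) N.-1))) (nth th q N.-1).
exists pol' => s' [Hs1 [Hs2 Hs3]].
pose s0 := take N (th :: s').
have Hs0 : admissible_path P N th s0.
  split; first by rewrite size_take /= Hs1 ltnSn.
  split; first by rewrite /s0; move: N0; case: (N).
  move=> i Hi; rewrite /s0 !nth_take //; last by apply: ltnW.
  case: i Hi => [|i] Hi /=.
    move: Hs1 Hs2; case: (s') => [|a s''] /=; first by move=> E; rewrite -E in N0.
    by move=> _ ->.
  rewrite (set_nth_default th' th); last by rewrite Hs1; apply: (ltn_trans _ Hi).
  rewrite (set_nth_default th' th); last by rewrite Hs1; apply: (ltn_trans _ Hi).
  by apply: Hs3; apply: ltnW.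
have [Hc Ht] := Hfeas s0 Hs0.
have Hx : forall k, (k < N)%N ->
  xstate f (f x (kappaN ustar th) th) th' pol' s' k = xstate f x th ustar s0 k.+1.
  elim=> [|k IH] Hk.
    by rewrite /= /s0 /kappaN take_takel // nth_take //= take0.
  rewrite /= IH; last by apply: ltnW.
  congr f.
    rewrite /pol' size_take Hs1 Hk Hk /s0.
    by rewrite take_takel.
  rewrite /s0 nth_take //= (set_nth_default th' th) // Hs1 ltnW //.
split.
  move=> k Hk.
  rewrite Hx //.
  have [Hk1|Hk1] := ltnP k.+1 N.
    have := Hc k.+1 Hk1.
    rewrite /pol' size_take Hs1 Hk1 Hk1.
    rewrite /s0 nth_take //= (set_nth_default th' th); last by rewrite Hs1 ltnW.
    have -> : take k.+2 (take N (th :: s')) = th :: take k.+1 s'.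
      by rewrite take_takel.
    done.
  have Ek : k = N.-1 by rewrite -(prednK N0) in Hk Hk1 *; apply/eqP; rewrite eqn_leq -ltnS Hk.
  have EN : k.+1 = N by rewrite Ek prednK.
  have Tk : take N s' = s' by rewrite -Hs1 take_size.
  rewrite EN Ht /pol' Tk Hs1 ltnn -Ek.
  have -> : nth th s0 k = nth th (th :: s') k by rewrite /s0 nth_take.
  rewrite (@set_nth_default _ s' th' th k) ?Hs1 //.
  by case: (Hub (bet (nth th (th :: s') k)) (nth th' s' k)).
have EN : N = N.-1.+1 by rewrite prednK.
rewrite [in LHS]EN /= Hx; last by rewrite ltn_predL.
have Tk : take N s' = s' by rewrite -Hs1 take_size.
rewrite -EN Ht /pol' Tk Hs1 ltnn.
have -> : nth th s0 N.-1 = nth th (th :: s') N.-1 by rewrite /s0 nth_take // ltn_predL.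
rewrite (@set_nth_default _ s' th' th N.-1); last by rewrite Hs1 ltn_predL.
by case: (Hub (bet (nth th (th :: s') N.-1)) (nth th' s' N.-1)).
Qed.
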